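(* For each choice $\lambda\in\{1,\,2,\,\frac{|V(\mathcal{B})|}{4}\}$, there are infinitely many balanced bipartite graphs $\mathcal{B}$ (with parts $V_1,V_2$, $|V_1|=|V_2|=n=\frac{|V(\mathcal{B})|}{2}$) such that: (i) $\delta(\mathcal{B})\geq \frac{|V(\mathcal{B})|}{4}+1$; and (ii) there exists a subset $S\subseteq V(\mathcal{B})$ with $|S|=\frac{|V(\mathcal{B})|}{2}+1$ such that $\mathcal{B}[S]$ is a forest and $|S\cap V_i|=\lambda$ for some $i\in\{1,2\}$.
   Context: All graphs are finite and simple. A balanced bipartite graph on $2n$ vertices is a bipartite graph with a given bipartition $(V_1,V_2)$ where $|V_1|=|V_2|=n$. $\delta(G)$ denotes the minimum degree of $G$, and $G[S]$ the subgraph induced by $S\subseteq V(G)$. *)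

(* Defs.v *)
From mathcomp Require Import all_boot.
Set Implicit Arguments. Unset Strict Implicit. Unset Printing Implicit Defensive.

(* Balanced bipartite graph on 2n vertices: vertex set 'I_n + 'I_n,
   V_1 = left copies (inl), V_2 = right copies (inr). *)
Definition bvert (n : nat) : finType := ('I_n + 'I_n)%type.

Definition in_V1 (n : nat) (v : bvert n) : bool :=
  if v is inl _ then true else false.

Definition part (n : nat) (i : bool) : {set bvert n} :=
  [set v | in_V1 v == i].

Definition bip_graph (n : nat) (e : rel (bvert n)) : Prop :=
  symmetric e /\ irreflexive e /\ (forall x y, e x y -> in_V1 x != in_V1 y).

Definition deg (n : nat) (e : rel (bvert n)) (v : bvert n) : nat :=
  #|[set u | e v u]|.

Definition induced_forest (n : nat) (e : rel (bvert n)) (S : {set bvert n}) : Prop :=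
  ~ exists c : seq (bvert n),
      [/\ uniq c, 2 < size c, all (fun v => v \in S) c & cycle e c].

Inductive lam_choice := Lam1 | Lam2 | LamQuarter.

Definition lam_ok (c : lam_choice) (N k : nat) : Prop :=
  match c with
  | Lam1 => k = 1
  | Lam2 => k = 2
  | LamQuarter => 4 * k = N
  end.

(* Main.v *)
Require Import Defs.
From mathcomp Require Import all_boot.
From mathcomp Require Import zify.

Lemma card_count n (P : pred nat) : #|[set j : 'I_n | P (val j)]| = count P (iota 0 n).
Proof.
rewrite -val_enum_ord count_map cardE /enum_mem -enumT size_filter.
rewrite (@eq_filter _ _ predT) // filter_predT.
by apply: eq_count => j /=; rewrite inE.
Qed.

Lemma count_all_iota (P : pred nat) s t :
  (forall j, s <= j < s + t -> P j) -> count P (iota s t) = t.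
Proof.
move=> H; rewrite -[in RHS](size_iota s t) -count_predT.
apply: eq_in_count => j; rewrite mem_iota => /H ->. by [].
Qed.

Lemma count_none_iota (P : pred nat) s t :
  (forall j, s <= j < s + t -> ~~ P j) -> count P (iota s t) = 0.
Proof.
move=> H; rewrite -(count_pred0 (iota s t)).
apply: eq_in_count => j; rewrite mem_iota => /H /negbTE ->. by [].
Qed.

Lemma count_iota_int (P : pred nat) s t x k : s <= x -> x + k <= s + t ->
  (forall j, x <= j < x + k -> P j) -> k <= count P (iota s t).
Proof.
move=> h1 h2 H.
have -> : iota s t = iota s (x - s) ++ iota x k ++ iota (x + k) (s + t - (x + k)).
  rewrite {1}(_ : t = (x - s) + (k + (s + t - (x + k)))); last by lia.
  rewrite !iotaD. have -> : s + (x - s) = x by lia. by [].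
rewrite !count_cat (@count_all_iota P x k H). lia.
Qed.

Lemma count_two (P : pred nat) n x1 k1 x2 k2 : x1 + k1 <= x2 -> x2 + k2 <= n ->
  (forall j, x1 <= j < x1 + k1 -> P j) -> (forall j, x2 <= j < x2 + k2 -> P j) ->
  k1 + k2 <= count P (iota 0 n).
Proof.
move=> h1 h2 H1 H2.
have -> : iota 0 n = iota 0 x2 ++ iota x2 (n - x2).
  rewrite -iotaD. congr iota; lia.
rewrite count_cat; apply: leq_add.
  apply: (@count_iota_int P 0 x2 x1 k1) => //; lia.
apply: (@count_iota_int P x2 (n - x2) x2 k2) => //; lia.
Qed.

Lemma count_lt n k : k <= n -> count (fun j => j < k) (iota 0 n) = k.
Proof.
move=> h.
have -> : iota 0 n = iota 0 k ++ iota k (n - k).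
  rewrite -iotaD. congr iota; lia.
rewrite count_cat (@count_all_iota _ 0 k); last by move=> j; lia.
rewrite (@count_none_iota _ k); last by move=> j; lia.
by rewrite addn0.
Qed.

Lemma count_neq n m : m < n -> count (fun j => j != m) (iota 0 n) = n.-1.
Proof.
move=> h.
have := count_predC (pred1 m) (iota 0 n).
rewrite count_uniq_mem ?iota_uniq // mem_iota size_iota /=.
rewrite add0n h add1n => e. rewrite (@eq_count _ _ (predC (pred1 m))) //; move=> {h}; move: e; set c := count _ _ => e; rewrite -e /=; congr count.
Qed.

Definition mkE n (adj : nat -> nat -> bool) : rel (bvert n) :=
  fun x y => match x, y with
             | inl i, inr j => adj i j
             | inr j, inl i => adj i j
             | _, _ => false end.

Lemma mkE_bip n adj : bip_graph (mkE n adj).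
Proof.
split; first by case=> [i|j] [k|l].
split; first by case.
by case=> [i|j] [k|l].
Qed.

Definition mkS n (P Q : pred nat) : {set bvert n} :=
  [set v | match v with inl i => P (val i) | inr j => Q (val j) end].

Lemma card_mkS n P Q : #|mkS n P Q| = count P (iota 0 n) + count Q (iota 0 n).
Proof.
have -> : mkS n P Q = inl @: [set j : 'I_n | P (val j)] :|: inr @: [set j : 'I_n | Q (val j)].
  apply/setP => [[i|j]]; rewrite !inE.
    apply/idP/orP => [Pi|[/imsetP [x xP [->]]|/imsetP [x _ //]]].
      by left; apply/imsetP; exists i; rewrite ?inE.
    by rewrite inE in xP.
  apply/idP/orP => [Pi|[/imsetP [x _ //]|/imsetP [x xP [->]]]].
    by right; apply/imsetP; exists j; rewrite ?inE.
  by rewrite inE in xP.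
rewrite cardsU.
have -> : inl @: [set j : 'I_n | P (val j)] :&: inr @: [set j : 'I_n | Q (val j)] = set0.
  apply/setP => v; rewrite !inE.
  apply/andP => -[/imsetP [x _ ->] /imsetP [y _]]; discriminate.
rewrite cards0 subn0 !card_imset; try (move=> ? ? []; done).
by rewrite !card_count.
Qed.

Lemma mkS_part n P Q : mkS n P Q :&: part n true = mkS n P pred0.
Proof. by apply/setP => v; rewrite !inE; case: v => x /=; rewrite ?andbT ?andbF. Qed.

Lemma deg_inl n (adj : nat -> nat -> bool) (i : 'I_n) (P : pred nat) :
  (forall j : 'I_n, P (val j) -> adj (val i) (val j)) ->
  count P (iota 0 n) <= deg (mkE n adj) (inl i).
Proof.
move=> H; rewrite -card_count /deg.
rewrite -(@card_imset _ (bvert n) inr _ (@inr_inj _ _)).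
apply: subset_leq_card; apply/subsetP => v /imsetP [j]; rewrite !inE => Pj ->.
exact: H.
Qed.

Lemma deg_inr n (adj : nat -> nat -> bool) (j : 'I_n) (P : pred nat) :
  (forall i : 'I_n, P (val i) -> adj (val i) (val j)) ->
  count P (iota 0 n) <= deg (mkE n adj) (inr j).
Proof.
move=> H; rewrite -card_count /deg.
rewrite -(@card_imset _ (bvert n) inl _ (@inl_inj _ _)).
apply: subset_leq_card; apply/subsetP => v /imsetP [i]; rewrite !inE => Pi ->.
exact: H.
Qed.

Lemma forest_rank n (e : rel (bvert n)) (S : {set bvert n}) (r : bvert n -> nat) :
  symmetric e ->
  (forall v u w, v \in S -> u \in S -> w \in S -> e v u -> e v w ->
     r u <= r v -> r w <= r v -> u = w) ->
  induced_forest e S.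
Proof.
move=> sym H [c [uq sz allS cyc]].
have [v vc vmax] : exists2 v, v \in c & forall x, x \in c -> r x <= r v.
  case: c sz {uq allS cyc} => [|x0 c] // _.
  have : (x0 \in x0 :: c) by rewrite inE eqxx.
  move=> x0c.
  case: (@arg_maxnP _ x0 (fun x => x \in x0 :: c) r x0c) => v vc vm.
  by exists v.
case/splitPr: vc uq sz allS cyc vmax => p1 p2.
rewrite -(rot_uniq (size p1)) -(rot_cycle (size p1)) rot_size_cat !cat_cons.
move=> uq sz allS cyc vmax.
have memc : forall x, x \in v :: p2 ++ p1 -> x \in p1 ++ v :: p2.
  move=> x; rewrite !inE !mem_cat !inE. by case/orP=> [->|/orP[]->]; rewrite ?orbT.
have inS : forall x, x \in v :: p2 ++ p1 -> x \in S.
  by move=> x /memc xc; move/allP: allS => /(_ x xc).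
have hq : 1 < size (p2 ++ p1) by move: sz; rewrite !size_cat /=; lia.
move: uq cyc inS memc hq.
case: (p2 ++ p1) => [|u q] //.
case/lastP: q => [|q w] //.
move=> uq cyc inS memc _.
rewrite /= in cyc.
move/andP: cyc => [evu]; rewrite rcons_path last_rcons => /andP [_ ewv].
have uw : u != w.
  move: uq; rewrite /= => /andP [_ /andP [unq _]].
  by apply: contraNneq unq => ->; rewrite mem_rcons inE eqxx.
move/eqP: uw; apply.
have wc : w \in [:: v, u & rcons q w] by rewrite !inE mem_rcons inE eqxx !orbT.
have uc : u \in [:: v, u & rcons q w] by rewrite !inE eqxx !orbT.
have vc : v \in [:: v, u & rcons q w] by rewrite !inE eqxx.
apply: (H v); rewrite ?inS ?vmax ?memc //.
by rewrite sym.
Qed.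

Lemma deg_inl' n (adj : nat -> nat -> bool) (i : 'I_n) k :
  k <= count (adj (val i)) (iota 0 n) -> k <= deg (mkE n adj) (inl i).
Proof. move=> h; apply: (leq_trans h); exact: deg_inl. Qed.

Lemma deg_inr' n (adj : nat -> nat -> bool) (j : 'I_n) k :
  k <= count (fun x => adj x (val j)) (iota 0 n) -> k <= deg (mkE n adj) (inr j).
Proof. move=> h; apply: (leq_trans h); exact: deg_inr. Qed.

Lemma sym_mkE n adj : symmetric (mkE n adj).
Proof. by case: (mkE_bip n adj). Qed.

Definition adj2 (m i j : nat) : bool :=
  ((i == 0) && (j <= m)) || ((i == 1) && (m <= j.+1)) || (2 <= i).
Definition adj3 (m i j : nat) : bool :=
  (m <= i) || (m < j) || (j == i) || (j == i.+1).

Theorem theorem2p6 :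
  forall (c : lam_choice) (N0 : nat),
    exists n : nat, N0 <= n /\
    exists e : rel (bvert n),
      [/\ bip_graph e,
          (forall v : bvert n, 4 * deg e v >= 2 * n + 4) &
          exists S : {set bvert n},
            [/\ #|S| = n + 1,
                induced_forest e S &
                exists i : bool, lam_ok c (2 * n) #|S :&: part n i| ]].
Proof.
move=> c N0; case: c.
- exists N0.+2; split; first by lia.
  exists (mkE N0.+2 (fun _ _ => true)); split; first exact: mkE_bip.
  + move=> [i|j].
      have : N0.+2 <= deg (mkE N0.+2 (fun _ _ => true)) (inl i).
        by apply: deg_inl'; apply: (@count_iota_int _ 0 N0.+2 0 N0.+2).
      lia.
    have : N0.+2 <= deg (mkE N0.+2 (fun _ _ => true)) (inr j).
      by apply: deg_inr'; apply: (@count_iota_int _ 0 N0.+2 0 N0.+2).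
    lia.
  + exists (mkS N0.+2 (fun j => j < 1) predT); split.
    * by rewrite card_mkS count_lt // count_predT size_iota addnC addn1.
    * apply: (@forest_rank _ _ _ (fun v => if v is inl _ then 0 else 1)).
        exact: sym_mkE.
      move=> [i|j] [k|l] [k'|l'] //= hv hu hw;
      rewrite !inE /= in hv hu hw * => h1 h2 h3 h4;
      (try congr inl); (try congr inr); apply/val_inj => /=; lia.
    * by exists true; rewrite mkS_part card_mkS count_lt // count_pred0.
- pose m := N0 + 3. have mdef : m = N0 + 3 by [].
  pose adj := adj2 m. clearbody m.
  exists (2 * m); split; first by lia.
  exists (mkE (2 * m) adj); split; first exact: mkE_bip.
  + move=> [i|j].
      have : m.+1 <= deg (mkE (2 * m) adj) (inl i).
        apply: deg_inl'.
        have [/eqP i0|i0] := boolP (nat_of_ord i == 0).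
          apply: (@count_iota_int _ 0 (2 * m) 0 m.+1); try lia.
          move=> j hj; rewrite /adj /adj2 /adj3 /= i0; lia.
        have [/eqP i1|i1] := boolP (nat_of_ord i == 1).
          apply: (@count_iota_int _ 0 (2 * m) m.-1 m.+1); try lia.
          move=> j hj; rewrite /adj /adj2 /adj3 /= i1; lia.
        apply: (@count_iota_int _ 0 (2 * m) 0 m.+1); try lia.
        move=> j hj; rewrite /adj /adj2 /adj3 /=; lia.
      lia.
    have : (2 * m - 2) <= deg (mkE (2 * m) adj) (inr j).
      apply: deg_inr'.
      apply: (@count_iota_int _ 0 (2 * m) 2 (2 * m - 2)); try lia.
      move=> i hi; rewrite /adj /adj2 /adj3 /=; lia.
    lia.
  + exists (mkS (2 * m) (fun i => i < 2) (fun j => j != m)); split.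
    * rewrite card_mkS count_lt ?count_neq; lia.
    * apply: (@forest_rank _ _ _ (fun v => match v with inl i => 2 * val i
                                         | inr j => 1 + 2 * (m <= val j) end)).
        exact: sym_mkE.
      rewrite /adj /adj2 /adj3; move=> [i|j] [k|l] [k'|l'] //= hv hu hw;
      rewrite !inE /= in hv hu hw * => h1 h2 h3 h4;
      (try congr inl); (try congr inr); apply/val_inj => /=; lia.
    * by exists true; rewrite mkS_part card_mkS count_lt ?count_pred0 //; lia.
- pose m := N0.+1. have mdef : m = N0.+1 by [].
  pose adj := adj3 m. clearbody m.
  exists (2 * m); split; first by lia.
  exists (mkE (2 * m) adj); split; first exact: mkE_bip.
  + move=> [i|j].
      have : m.+1 <= deg (mkE (2 * m) adj) (inl i).
        apply: deg_inl'.
        have [im|im] := ltnP (nat_of_ord i) m.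
          have -> : m.+1 = 2 + (m - 1) by lia.
          apply: (@count_two _ _ (nat_of_ord i) 2 m.+1 (m - 1)); try lia.
            move=> j hj; rewrite /adj /adj2 /adj3 /=; lia.
          move=> j hj; rewrite /adj /adj2 /adj3 /=; lia.
        apply: (@count_iota_int _ 0 (2 * m) 0 m.+1); try lia.
        move=> j hj; rewrite /adj /adj2 /adj3 /=; lia.
      lia.
    have : m.+1 <= deg (mkE (2 * m) adj) (inr j).
      apply: deg_inr'.
      have [jm|jm] := ltnP (nat_of_ord j) m.
        have -> : m.+1 = 1 + m by lia.
        apply: (@count_two _ _ (nat_of_ord j) 1 m m); try lia.
          move=> i hi; rewrite /adj /adj2 /adj3 /=; lia.
        move=> i hi; rewrite /adj /adj2 /adj3 /=; lia.
      apply: (@count_iota_int _ 0 (2 * m) m.-1 m.+1); try lia.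
      move=> i hi; rewrite /adj /adj2 /adj3 /=; lia.
    lia.
  + exists (mkS (2 * m) (fun i => i < m) (fun j => j < m.+1)); split.
    * rewrite card_mkS !count_lt; lia.
    * apply: (@forest_rank _ _ _ (fun v => match v with inl i => (val i).*2.+1
                                         | inr j => (val j).*2 end)).
        exact: sym_mkE.
      rewrite /adj /adj2 /adj3; move=> [i|j] [k|l] [k'|l'] //= hv hu hw;
      rewrite !inE /= in hv hu hw * => h1 h2 h3 h4;
      (try congr inl); (try congr inr); apply/val_inj => /=; lia.
    * by exists true; rewrite mkS_part card_mkS count_lt ?count_pred0 //=; lia.
Qed.
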